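(* Let $\Theta$ be a well-formed System $\mathsf{F_\wedge}$ context, $S, S'$ types over $\Theta$, $T$ a type over $\Theta, X<:\top$, and $t$ a term. If $\Theta \vdash t : \forall X.\,T[X\wedge S/X^-]$ and $\Theta \vdash S' <: S$, then $\Theta \vdash t\{S'\} : T[S'/X]$.
   Context: System $\mathsf{F_\wedge}$: raw types $T ::= \top \mid X \mid T \to T \mid \forall X.T \mid T \wedge T$ ($\forall X.T$ means $\forall(X<:\top).T$), up to $\alpha$-conversion. Contexts: finite sequences of $X<:T$ or $x:T$ with distinct variables, each type well-formed over the preceding part. Subtyping rules: (Var) $\Theta,X<:T,\Theta'\vdash X<:T$; (Top) $T<:\top$; (Refl); (Trans); ($\to$) from $S'<:S$, $T<:T'$ infer $S\to T<:S'\to T'$; ($\forall$) from $\Theta,X<:\top\vdash S<:T$ infer $\Theta\vdash\forall X.S<:\forall X.T$; (meet) $S\wedge S'<:S$, $S\wedge S'<:S'$, from $T<:S$, $T<:S'$ infer $T<:S\wedge S'$. Raw terms $t ::= \mathsf{top} \mid x \mid \lambda(x:T).t \mid \Lambda(X<:T).t \mid t\,t \mid t\{T\}$. Typing rules: $\Theta\vdash\mathsf{top}:\top$; $\Theta,x:T,\Theta'\vdash x:T$; (sub) from $t:T$ and $T<:T'$ infer $t:T'$; from $\Theta,x:S\vdash t:T$ infer $\Theta\vdash\lambda(x:S).t:S\to T$; from $t:S\to T$ and $s:S$ infer $t\,s:T$; from $\Theta,X<:S\vdash t:T$ infer $\Theta\vdash\Lambda(X<:S).t:\forall(X<:S).T$;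 from $\Theta\vdash t:\forall(X<:S).T$ and $\Theta\vdash S'<:S$ infer $\Theta\vdash t\{S'\}:T[S'/X]$. Mixed substitution $T[(S_-,S_+)/X]$: $X\mapsto S_+$; other variables and $\top$ unchanged; $(T\to T')[(S_-,S_+)/X]=T[(S_+,S_-)/X]\to T'[(S_-,S_+)/X]$; commutes with $\forall Y$ and $\wedge$. $T[U/X^-]$ abbreviates $T[(U,X)/X]$. *)

(* Defs.v *)
(* System F_/\ with de Bruijn indices (alpha-conversion is built in).
   Type variables and term variables live in separate index spaces:
   type variable index n refers to the n-th type binding X<:T counted from the
   right end of the context (term bindings are skipped); term variable index n
   refers to the n-th term binding x:T counted from the right.
   The type stored in a context entry lives over the type bindings to its left. *)
From Stdlib Require Import Arith List.
Import ListNotations.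

(* Raw types  T ::= Top | X | T -> T | forall X. T | T /\ T
   (forall X.T means forall (X<:Top).T) *)
Inductive ty : Type :=
| TTop : ty
| TVar : nat -> ty
| TArr : ty -> ty -> ty
| TAll : ty -> ty
| TMeet : ty -> ty -> ty.

Inductive tm : Type :=
| ttop : tm
| tvar : nat -> tm
| tabs : ty -> tm -> tm
| ttabs : ty -> tm -> tm
| tapp : tm -> tm -> tm
| ttapp : tm -> ty -> tm.

(* Context entries: X<:T  or  x:T ; head of the list = rightmost entry. *)
Inductive entry : Type :=
| CTy : ty -> entry
| CTm : ty -> entry.

Definition ctx := list entry.

Fixpoint tshift (c d : nat) (T : ty) : ty :=
  match T with
  | TTop => TTop
  | TVar n => if c <=? n then TVar (n + d) else TVar n
  | TArr A B => TArr (tshift c d A) (tshift c d B)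
  | TAll B => TAll (tshift (S c) d B)
  | TMeet A B => TMeet (tshift c d A) (tshift c d B)
  end.

(* ordinary capture-avoiding substitution T[U/X_j], X_j removed from context
   (U lives in the context without X_j) *)
Fixpoint tsubst (j : nat) (U : ty) (T : ty) : ty :=
  match T with
  | TTop => TTop
  | TVar n =>
      if n =? j then tshift 0 j U
      else if j <? n then TVar (pred n) else TVar n
  | TArr A B => TArr (tsubst j U A) (tsubst j U B)
  | TAll B => TAll (tsubst (S j) U B)
  | TMeet A B => TMeet (tsubst j U A) (tsubst j U B)
  end.

(* Sm, Sp live in the same context as T. *)
Fixpoint msubst (j : nat) (Sm Sp : ty) (T : ty) : ty :=
  match T with
  | TTop => TTop
  | TVar n => if n =? j then tshift 0 j Sp else TVar n
  | TArr A B => TArr (msubst j Sp Sm A) (msubst j Sm Sp B)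
  | TAll B => TAll (msubst (S j) Sm Sp B)
  | TMeet A B => TMeet (msubst j Sm Sp A) (msubst j Sm Sp B)
  end.

(* bound of the type variable with index n, expressed over the whole context *)
Fixpoint get_tybound (G : ctx) (n : nat) : option ty :=
  match G, n with
  | [], _ => None
  | CTy T :: _, 0 => Some (tshift 0 1 T)
  | CTy _ :: G', S m => option_map (tshift 0 1) (get_tybound G' m)
  | CTm _ :: G', _ => get_tybound G' n
  end.

(* type of the term variable with index n, expressed over the whole context *)
Fixpoint get_tm (G : ctx) (n : nat) : option ty :=
  match G, n with
  | [], _ => None
  | CTm T :: _, 0 => Some T
  | CTm _ :: G', S m => get_tm G' m
  | CTy _ :: G', _ => option_map (tshift 0 1) (get_tm G' n)
  end.

Fixpoint ntyvars (G : ctx) : nat :=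
  match G with
  | [] => 0
  | CTy _ :: G' => S (ntyvars G')
  | CTm _ :: G' => ntyvars G'
  end.

Fixpoint wf_ty_n (k : nat) (T : ty) : Prop :=
  match T with
  | TTop => True
  | TVar n => n < k
  | TArr A B => wf_ty_n k A /\ wf_ty_n k B
  | TAll B => wf_ty_n (S k) B
  | TMeet A B => wf_ty_n k A /\ wf_ty_n k B
  end.

Definition wf_ty (G : ctx) (T : ty) : Prop := wf_ty_n (ntyvars G) T.

(* well-formed context: each type is well formed over the preceding part
   (distinctness of variables is automatic with de Bruijn indices) *)
Fixpoint wf_ctx (G : ctx) : Prop :=
  match G with
  | [] => True
  | CTy T :: G' => wf_ty G' T /\ wf_ctx G'
  | CTm T :: G' => wf_ty G' T /\ wf_ctx G'
  end.

Inductive sub : ctx -> ty -> ty -> Prop :=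
| S_Var : forall G n T, get_tybound G n = Some T -> sub G (TVar n) T
| S_Top : forall G T, sub G T TTop
| S_Refl : forall G T, sub G T T
| S_Trans : forall G T1 T2 T3, sub G T1 T2 -> sub G T2 T3 -> sub G T1 T3
| S_Arr : forall G S1 S2 T1 T2,
    sub G S2 S1 -> sub G T1 T2 -> sub G (TArr S1 T1) (TArr S2 T2)
| S_All : forall G S1 T1,
    sub (CTy TTop :: G) S1 T1 -> sub G (TAll S1) (TAll T1)
| S_MeetL : forall G S1 S2, sub G (TMeet S1 S2) S1
| S_MeetR : forall G S1 S2, sub G (TMeet S1 S2) S2
| S_Meet : forall G T S1 S2, sub G T S1 -> sub G T S2 -> sub G T (TMeet S1 S2).

(* Typing.  Since types only contain the quantifier forall X.T = forall(X<:Top).T,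
   the rules producing / consuming forall(X<:S).T are instantiated at S = Top. *)
Inductive typing : ctx -> tm -> ty -> Prop :=
| T_Top : forall G, typing G ttop TTop
| T_Var : forall G n T, get_tm G n = Some T -> typing G (tvar n) T
| T_Sub : forall G t T T', typing G t T -> sub G T T' -> typing G t T'
| T_Abs : forall G S1 t T,
    typing (CTm S1 :: G) t T -> typing G (tabs S1 t) (TArr S1 T)
| T_App : forall G t s S1 T,
    typing G t (TArr S1 T) -> typing G s S1 -> typing G (tapp t s) T
| T_TAbs : forall G t T,
    typing (CTy TTop :: G) t T -> typing G (ttabs TTop t) (TAll T)
| T_TApp : forall G t T S',
    typing G t (TAll T) -> sub G S' TTop -> typing G (ttapp t S') (tsubst 0 S' T).

(* Main.v *)
Require Import Defs.
From Stdlib Require Import List Arith Lia.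
Import ListNotations.

Ltac nat_cases :=
  repeat (cbn [tshift tsubst]; match goal with
  | |- context [?a <=? ?b] => destruct (Nat.leb_spec a b)
  | |- context [?a =? ?b] => destruct (Nat.eqb_spec a b)
  | |- context [?a <? ?b] => destruct (Nat.ltb_spec a b)
  end); cbn [tshift tsubst]; try (f_equal; lia); try lia.

Lemma tshift_0 : forall T c, tshift c 0 T = T.
Proof. induction T; intros; simpl; try nat_cases; f_equal; auto. Qed.

Lemma tshift_add : forall T c a b, tshift c a (tshift c b T) = tshift c (b + a) T.
Proof. induction T; intros; simpl; try (nat_cases; fail); f_equal; auto. Qed.

Lemma tshift_comm : forall T c0 c, c0 <= c ->
  tshift c0 1 (tshift c 1 T) = tshift (S c) 1 (tshift c0 1 T).
Proof.
  induction T; intros; simpl; try (nat_cases; fail); f_equal; auto.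
  apply IHT; lia.
Qed.

Lemma tsubst_shift : forall T U c j d, c <= j -> j <= c + d ->
  tsubst j U (tshift c (S d) T) = tshift c d T.
Proof.
  induction T; intros; simpl; try (nat_cases; fail); f_equal; auto.
  apply IHT; lia.
Qed.

Fixpoint ctx_ins (c : nat) (G : ctx) : ctx :=
  match c, G with
  | 0, _ => CTy TTop :: G
  | S c', CTy T :: G' => CTy (tshift c' 1 T) :: ctx_ins c' G'
  | S _, CTm T :: G' => CTm T :: ctx_ins c G'
  | S _, [] => []
  end.

Lemma get_ins : forall G c n,
  get_tybound (ctx_ins c G) (if c <=? n then S n else n)
  = option_map (tshift c 1) (get_tybound G n).
Proof.
  induction G as [|e G IH]; intros c n.
  - destruct c; simpl; auto.
  - destruct c as [|c].
    + simpl. destruct e; reflexivity.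
    + destruct e as [T|T].
      * destruct n as [|m]; simpl.
        -- f_equal. apply tshift_comm. lia.
        -- specialize (IH c m).
           destruct (c <=? m); simpl in *; rewrite IH;
           destruct (get_tybound G m); simpl; auto;
           f_equal; apply tshift_comm; lia.
      * exact (IH (S c) n).
Qed.

Lemma sub_weak_gen : forall G A B, sub G A B -> forall c,
  sub (ctx_ins c G) (tshift c 1 A) (tshift c 1 B).
Proof.
  induction 1; intros c; simpl; try (econstructor; eauto; fail).
  - pose proof (get_ins G c n) as E. rewrite H in E. simpl in E.
    destruct (c <=? n); apply S_Var; rewrite <- E; try reflexivity; f_equal; lia.
  - apply S_All. apply (IHsub (S c)).
Qed.

Lemma sub_weak1 : forall G A B, sub G A B ->
  sub (CTy TTop :: G) (tshift 0 1 A) (tshift 0 1 B).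
Proof. intros. pose proof (sub_weak_gen _ _ _ H 0) as W. destruct G as [|[]]; exact W. Qed.

Lemma mono : forall T S U j G,
  sub G (tshift 0 j U) (tshift 0 j S) ->
  sub G (tsubst j U (msubst j (TMeet (TVar 0) (tshift 0 1 S)) (TVar 0) T)) (tsubst j U T) /\
  sub G (tsubst j U T) (tsubst j U (msubst j (TVar 0) (TMeet (TVar 0) (tshift 0 1 S)) T)).
Proof.
  induction T; intros S0 U j G H; simpl.
  - split; apply S_Refl.
  - destruct (Nat.eqb_spec n j).
    + subst. simpl. rewrite Nat.eqb_refl.
      rewrite tshift_add, tsubst_shift by lia.
      split; [apply S_Refl | apply S_Meet; [apply S_Refl | exact H]].
    + simpl. apply Nat.eqb_neq in n0. rewrite n0. split; apply S_Refl.
  - destruct (IHT1 S0 U j G H), (IHT2 S0 U j G H).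
    split; apply S_Arr; auto.
  - assert (H' : sub (CTy TTop :: G) (tshift 0 (S j) U) (tshift 0 (S j) S0)).
    { pose proof (sub_weak1 _ _ _ H) as W. rewrite !tshift_add in W.
      rewrite Nat.add_1_r in W. exact W. }
    destruct (IHT S0 U (S j) _ H').
    split; apply S_All; auto.
  - destruct (IHT1 S0 U j G H), (IHT2 S0 U j G H).
    split; apply S_Meet.
    + eapply S_Trans; [apply S_MeetL|]; auto.
    + eapply S_Trans; [apply S_MeetR|]; auto.
    + eapply S_Trans; [apply S_MeetL|]; auto.
    + eapply S_Trans; [apply S_MeetR|]; auto.
Qed.

(* If  Theta |- t : forall X. T[X /\ S / X^-]  and  Theta |- S' <: S,
   then Theta |- t{S'} : T[S'/X].
   T[X/\S / X^-] = T[(X/\S, X)/X]; inside the binder X has index 0 and S is shifted. *)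
Theorem proposition5p1 :
  forall (G : ctx) (S S' T : ty) (t : tm),
    wf_ctx G ->
    wf_ty G S ->
    wf_ty G S' ->
    wf_ty (CTy TTop :: G) T ->
    typing G t (TAll (msubst 0 (TMeet (TVar 0) (tshift 0 1 S)) (TVar 0) T)) ->
    sub G S' S ->
    typing G (ttapp t S') (tsubst 0 S' T).
Proof.
  intros G S S' T t _ _ _ _ Ht Hs.
  eapply T_Sub.
  - apply T_TApp; [exact Ht | apply S_Top].
  - apply (mono T S S' 0 G). rewrite !tshift_0. exact Hs.
Qed.
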